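(* Let $a,\Theta\in l_0(\mathbb{Z})$ with $\Theta^\star=\Theta$ and $\det\mathcal M_{a,\Theta}(z)\not\equiv0$. Then $\det\mathcal M_{a,\Theta}(z)\le0$ for all $z\in\mathbb{T}$ if and only if $s^+_{a,\Theta}=s^-_{a,\Theta}=1$.
   Context: $l_0(\mathbb{Z})$: finitely supported sequences $u$, with $u(z)=\sum_ku(k)z^k$ and $u^\star(z)=\sum_k\overline{u(k)}z^{-k}$. $\mathbb{T}$ is the unit circle. $\mathcal M_{a,\Theta}(z)=\begin{bmatrix}\Theta(z)-\Theta(z^2)a(z)a^\star(z)&-\Theta(z^2)a(z)a^\star(-z)\\-\Theta(z^2)a(-z)a^\star(z)&\Theta(-z)-\Theta(z^2)a(-z)a^\star(-z)\end{bmatrix}$, which is Hermitian for $z\in\mathbb{T}$. $s^\pm_{a,\Theta}:=\max_{z\in\mathbb{T}}\nu_\pm(\mathcal M_{a,\Theta}(z))$ where $\nu_\pm(H)$ are the numbers of positive/negative eigenvalues of a Hermitian matrix $H$. *)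

(* Defs.v *)
From HB Require Import structures.
From mathcomp Require Import all_boot all_order all_algebra.
Set Implicit Arguments. Unset Strict Implicit. Unset Printing Implicit Defensive.
Import Order.TTheory GRing.Theory Num.Theory.
Local Open Scope ring_scope.

(* A finitely supported sequence u in l_0(Z) is represented by a pair
   (m, s) : int * seq C meaning u(m + i) = s_i for i < size s and u(k) = 0
   for all other k.  Every finitely supported sequence arises this way. *)
Definition l0 (C : numClosedFieldType) := (int * seq C)%type.

Definition lcoef (C : numClosedFieldType) (u : l0 C) (k : int) : C :=
  match k - u.1 with
  | Posz n => nth 0 u.2 n
  | Negz _ => 0
  end.

Definition leval (C : numClosedFieldType) (u : l0 C) (z : C) : C :=
  \sum_(i < size u.2) lcoef u (u.1 + (i : nat)%:Z) * z ^ (u.1 + (i : nat)%:Z).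

Definition lstar_eval (C : numClosedFieldType) (u : l0 C) (z : C) : C :=
  \sum_(i < size u.2)
     (lcoef u (u.1 + (i : nat)%:Z))^* * z ^ (- (u.1 + (i : nat)%:Z)).

Definition self_star (C : numClosedFieldType) (u : l0 C) : Prop :=
  forall k : int, lcoef u (- k) = (lcoef u k)^*.

Definition on_T (C : numClosedFieldType) (z : C) : Prop := `|z| = 1.

Definition Mmat (C : numClosedFieldType) (a Th : l0 C) (z : C) : 'M[C]_2 :=
  \matrix_(i < 2, j < 2)
    if (i == 0 :> nat) then
      if (j == 0 :> nat) then
        leval Th z - leval Th (z ^+ 2) * leval a z * lstar_eval a z
      else - (leval Th (z ^+ 2) * leval a z * lstar_eval a (- z))
    else
      if (j == 0 :> nat) then
        - (leval Th (z ^+ 2) * leval a (- z) * lstar_eval a z)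
      else leval Th (- z) - leval Th (z ^+ 2) * leval a (- z) * lstar_eval a (- z).

(* eigenvalues of a square matrix, listed with algebraic multiplicity:
   the roots of its characteristic polynomial *)
Definition eigs (C : numClosedFieldType) (n : nat) (H : 'M[C]_n) : seq C :=
  sval (closed_field_poly_normal (char_poly H)).

Definition nu_pos (C : numClosedFieldType) (n : nat) (H : 'M[C]_n) : nat :=
  count (fun x => 0 < x) (eigs H).
Definition nu_neg (C : numClosedFieldType) (n : nat) (H : 'M[C]_n) : nat :=
  count (fun x => x < 0) (eigs H).

Definition max_on_T_eq (C : numClosedFieldType) (f : C -> nat) (k : nat) : Prop :=
  (exists2 z, on_T z & f z = k) /\ (forall z, on_T z -> (f z <= k)%N).

Definition s_pos_eq (C : numClosedFieldType) (a Th : l0 C) (k : nat) : Prop :=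
  max_on_T_eq (fun z => nu_pos (Mmat a Th z)) k.
Definition s_neg_eq (C : numClosedFieldType) (a Th : l0 C) (k : nat) : Prop :=
  max_on_T_eq (fun z => nu_neg (Mmat a Th z)) k.

(* Main.v *)
Require Import Defs.
From HB Require Import structures.
From mathcomp Require Import all_boot all_order all_algebra.
Import Order.TTheory GRing.Theory Num.Theory.
Local Open Scope ring_scope.
From mathcomp Require Import ring.
Set Implicit Arguments. Unset Strict Implicit.
Lemma det22 (C : comNzRingType) (H : 'M[C]_2) :
  \det H = H 0 0 * H 1 1 - H 0 1 * H 1 0.
Proof.
rewrite (expand_det_row _ 0) !big_ord_recl big_ord0 /cofactor !det_mx11.
rewrite /= !mxE /=.
have -> : lift 0 0 = 1 :> 'I_2 by apply: val_inj.
have -> : lift 1 0 = 0 :> 'I_2 by apply: val_inj.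
rewrite /bump /= expr0 expr1 mul1r mulN1r addr0 mulrN.
by [].
Qed.

Lemma tr22 (C : comNzRingType) (H : 'M[C]_2) : \tr H = H 0 0 + H 1 1.
Proof.
rewrite /mxtrace !big_ord_recl big_ord0 addr0 /=.
by have -> : lift ord0 ord0 = 1 :> 'I_2 by apply: val_inj.
Qed.

Lemma eig2 (C : numClosedFieldType) (H : 'M[C]_2) :
  exists l1 l2, eigs H = [:: l1; l2] /\ l1 + l2 = \tr H /\ l1 * l2 = \det H.
Proof.
rewrite /eigs; case: (closed_field_poly_normal _) => r /= E.
have M : char_poly H \is monic by apply: char_poly_monic.
rewrite (monicP M) scale1r in E.
have := size_char_poly H; rewrite E size_prod_XsubC.
case: r E => [|l1 [|l2 [|]]] //= E _.
exists l1, l2; split => //.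
have T := char_poly_trace H isT.
have D := char_poly_det H.
rewrite E !big_cons big_nil mulr1 in T D.
have P : ('X - l1%:P) * ('X - l2%:P) = 'X^2 - (l1 + l2) *: 'X + (l1 * l2)%:P :> {poly C}.
  rewrite polyCM -!mul_polyC polyCD; ring.
rewrite P in T D.
rewrite !coefD !coefN !coefZ !coefX !coefC !coefXn /= in T D.
split.
  by move: T; rewrite mulr1 sub0r addr0 => /oppr_inj.
by move: D; rewrite expr2 mulN1r opprK mul1r mulr0 subr0 add0r.
Qed.
Lemma signs (C : numDomainType) (l1 l2 : C) : l1 \is Num.real -> l2 \is Num.real ->
  [/\ l1 * l2 <= 0 -> leq (count (fun x => 0 < x) [:: l1; l2]) 1 /\
                      leq (count (fun x => x < 0) [:: l1; l2]) 1,
      l1 * l2 < 0 -> count (fun x => 0 < x) [:: l1; l2] = 1%N /\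
                      count (fun x => x < 0) [:: l1; l2] = 1%N &
      leq (count (fun x => 0 < x) [:: l1; l2]) 1 ->
      leq (count (fun x => x < 0) [:: l1; l2]) 1 -> l1 * l2 <= 0].
Proof.
move=> R1 R2 /=.
case: (real_ltgt0P R1) => h1; case: (real_ltgt0P R2) => h2;
  rewrite ?lt_irreflexive ?h1 ?h2 ?(lt_asym h1) ?(lt_asym h2) /=;
  rewrite ?mulr0 ?mul0r ?lexx ?lt_irreflexive //=.
all: try (by split).
- have p := mulr_gt0 h1 h2; split => //= H.
  + by have := lt_le_trans p H; rewrite ltxx.
  + by have := lt_trans p H; rewrite ltxx.
- have p : l1 * l2 < 0 by rewrite pmulr_rlt0.
  by split => //= _ _; exact: ltW.
- have p : l1 * l2 < 0 by rewrite nmulr_rlt0.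
  by split => //= _ _; exact: ltW.
- have p : 0 < l1 * l2 by rewrite nmulr_rgt0.
  split => //= H.
  + by have := lt_le_trans p H; rewrite ltxx.
  + by have := lt_trans p H; rewrite ltxx.
Qed.
Lemma real_pair (C : numClosedFieldType) (l1 l2 : C) :
  (l1 + l2) \is Num.real -> 0 <= (l1 - l2) ^+ 2 -> l1 \is Num.real /\ l2 \is Num.real.
Proof.
move=> Rs; rewrite -realEsqr => Rd.
have E1 : l1 = ((l1 + l2) + (l1 - l2)) / 2%:R.
  by apply: (mulIf (x := 2%:R)); rewrite ?pnatr_eq0 // divfK ?pnatr_eq0 // mulr_natr mulr2n; ring.
have R1 : l1 \is Num.real.
  rewrite E1; apply: rpredM; first exact: rpredD.
  by apply: ger0_real; rewrite invr_ge0 ler0n.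
split => //.
have -> : l2 = (l1 + l2) - l1 by ring.
exact: rpredB.
Qed.

Lemma conj_expz (C : numClosedFieldType) (z : C) (k : int) :
  `|z| = 1 -> (z ^ k)^* = z ^ (- k).
Proof.
move=> nz.
have zu : z \is a GRing.unit by rewrite unitfE -normr_eq0 nz oner_eq0.
have zc : z^* = z^-1.
  by apply: (mulfI (x := z)); rewrite ?divff -?normCK ?nz ?expr1n // -normr_eq0 nz oner_eq0.
rewrite (rmorphXz _ _ zu) /=; rewrite -exprz_inv -zc.
by [].
Qed.

Lemma lstarE (C : numClosedFieldType) (u : l0 C) (z : C) :
  `|z| = 1 -> lstar_eval u z = (leval u z)^*.
Proof.
move=> nz; rewrite /lstar_eval /leval rmorph_sum; apply: eq_bigr => i _.
by rewrite rmorphM /=; congr (_ * _); symmetry; apply: conj_expz.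
Qed.

Lemma sum_supp (C : numClosedFieldType) (g : int -> C) (S1 S2 : seq int) :
  uniq S1 -> uniq S2 -> (forall k, k \notin S1 -> g k = 0) ->
  (forall k, k \notin S2 -> g k = 0) ->
  \sum_(k <- S1) g k = \sum_(k <- S2) g k.
Proof.
move=> u1 u2 h1 h2.
have -> : \sum_(k <- S1) g k = \sum_(k <- S1 | k \in S2) g k.
  by rewrite [RHS]big_mkcond; apply: eq_bigr => k _; case: ifP => // /negbT /h2 ->.
have -> : \sum_(k <- S2) g k = \sum_(k <- S2 | k \in S1) g k.
  by rewrite [RHS]big_mkcond; apply: eq_bigr => k _; case: ifP => // /negbT /h1 ->.
rewrite -[LHS]big_filter -[RHS]big_filter; apply: perm_big; apply: uniq_perm; rewrite ?filter_uniq // => k.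
by rewrite !mem_filter andbC.
Qed.

Definition Sof (C : numClosedFieldType) (u : l0 C) : seq int :=
  [seq u.1 + (i : nat)%:Z | i <- iota 0 (size u.2)].

Lemma Sof_uniq (C : numClosedFieldType) (u : l0 C) : uniq (Sof u).
Proof.
rewrite map_inj_uniq ?iota_uniq // => i j /addrI [].
by [].
Qed.

Lemma lcoef_out (C : numClosedFieldType) (u : l0 C) k :
  k \notin Sof u -> lcoef u k = 0.
Proof.
rewrite /lcoef; case E : (k - u.1) => [n|n] // H.
apply: nth_default; rewrite leqNgt; apply/negP => Hn; move/negP: H; apply.
apply/mapP; exists n; first by rewrite mem_iota.
by rewrite -E addrC subrK.
Qed.

Lemma leval_seq (C : numClosedFieldType) (u : l0 C) z :
  leval u z = \sum_(k <- Sof u) lcoef u k * z ^ k.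
Proof.
rewrite /leval /Sof [RHS]big_map.
rewrite -(big_mkord xpredT (fun i : nat => lcoef u (u.1 + i%:Z) * z ^ (u.1 + i%:Z))).
by rewrite /index_iota subn0.
Qed.

Lemma leval_real (C : numClosedFieldType) (Th : l0 C) z :
  self_star Th -> `|z| = 1 -> (leval Th z)^* = leval Th z.
Proof.
move=> ss nz; rewrite -lstarE // /lstar_eval.
have -> : \sum_(i < size Th.2) (lcoef Th (Th.1 + (i : nat)%:Z))^* * z ^ (- (Th.1 + (i : nat)%:Z))
   = \sum_(k <- map -%R (Sof Th)) lcoef Th k * z ^ k.
  rewrite big_map /Sof big_map -(big_mkord xpredT (fun i : nat => (lcoef Th (Th.1 + i%:Z))^* * z ^ (- (Th.1 + i%:Z)))).
  by rewrite /index_iota subn0; apply: eq_bigr => i _; rewrite ss.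
rewrite (leval_seq Th z); apply: sum_supp.
- by rewrite map_inj_uniq ?Sof_uniq //; exact: oppr_inj.
- exact: Sof_uniq.
- move=> k Hk; have -> : lcoef Th k = 0; last by rewrite mul0r.
  rewrite -[k]opprK ss; apply/eqP; rewrite conjC_eq0; apply/eqP; apply: lcoef_out.
  by apply: contra Hk => H; apply/mapP; exists (- k) => //; rewrite opprK.
- by move=> k /lcoef_out ->; rewrite mul0r.
Qed.

Lemma realT (C : numClosedFieldType) (Th : l0 C) (z : C) :
  self_star Th -> `|z| = 1 -> leval Th z \is Num.real.
Proof. by move=> ss nz; rewrite CrealE leval_real. Qed.

Lemma herm (C : numClosedFieldType) (a Th : l0 C) (z : C) :
  self_star Th -> `|z| = 1 ->
  [/\ Mmat a Th z 0 0 \is Num.real, Mmat a Th z 1 1 \is Num.real &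
      Mmat a Th z 1 0 = (Mmat a Th z 0 1)^*].
Proof.
move=> ss nz.
have nz' : `|- z| = 1 by rewrite normrN.
have nz2 : `|z ^+ 2| = 1 by rewrite normrX nz expr1n.
rewrite !mxE /= !lstarE //.
have R0 := realT ss nz2.
split.
- apply: rpredB; first exact: realT.
  by rewrite -mulrA; apply: rpredM => //; apply: ger0_real; exact: mul_conjC_ge0.
- apply: rpredB; first exact: realT.
  by rewrite -mulrA; apply: rpredM => //; apply: ger0_real; exact: mul_conjC_ge0.
- rewrite rmorphN /= !rmorphM /= conjCK (conj_Creal R0).
  by rewrite -!mulrA [leval a (- z) * _]mulrC.
Qed.

Lemma eigsT (C : numClosedFieldType) (a Th : l0 C) (z : C) :
  self_star Th -> `|z| = 1 ->
  exists l1 l2, [/\ eigs (Mmat a Th z) = [:: l1; l2], l1 \is Num.real,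
                    l2 \is Num.real & l1 * l2 = \det (Mmat a Th z)].
Proof.
move=> ss nz; have [RA RD E] := herm a ss nz.
have [l1 [l2 [Ee [Et Ed]]]] := eig2 (Mmat a Th z).
exists l1, l2.
have [R1 R2] : l1 \is Num.real /\ l2 \is Num.real.
  apply: real_pair; first by rewrite Et tr22 rpredD.
  have -> : (l1 - l2) ^+ 2 = (l1 + l2) ^+ 2 - 4%:R * (l1 * l2) by ring.
  rewrite Et Ed tr22 det22 E.
  set A := Mmat a Th z 0 0; set D := Mmat a Th z 1 1; set B := Mmat a Th z 0 1.
  have -> : (A + D) ^+ 2 - 4%:R * (A * D - B * B^*) = (A - D) ^+ 2 + 4%:R * (B * B^*) by ring.
  apply: addr_ge0; first by rewrite -realEsqr rpredB.
  by apply: mulr_ge0; [exact: ler0n | exact: mul_conjC_ge0].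
by split.
Qed.

Theorem mainTheorem16 (C : numClosedFieldType) (a Th : l0 C) :
  self_star Th ->
  (exists2 z : C, on_T z & \det (Mmat a Th z) != 0) ->
  ((forall z : C, on_T z -> \det (Mmat a Th z) <= 0) <->
   (s_pos_eq a Th 1 /\ s_neg_eq a Th 1)).
Proof.
move=> ss [z0 Tz0 dz0]; rewrite /s_pos_eq /s_neg_eq /max_on_T_eq /nu_pos /nu_neg.
split.
- move=> H.
  have [l1 [l2 [Ee R1 R2 Ed]]] := eigsT a ss Tz0.
  have [_ P2 _] := signs R1 R2.
  have neg : l1 * l2 < 0 by rewrite lt_neqAle Ed dz0 H.
  have [c1 c2] := P2 neg.
  have bnd : forall z, on_T z ->
     leq (count (fun x => 0 < x) (eigs (Mmat a Th z))) 1 /\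
     leq (count (fun x => x < 0) (eigs (Mmat a Th z))) 1.
    move=> z Tz; have [m1 [m2 [Fe S1 S2 Fd]]] := eigsT a ss Tz.
    have [Q1 _ _] := signs S1 S2.
    by rewrite Fe; apply: Q1; rewrite Fd; apply: H.
  split; split.
  + by exists z0 => //; rewrite Ee.
  + by move=> z /bnd [].
  + by exists z0 => //; rewrite Ee.
  + by move=> z /bnd [].
- move=> [[_ Hp] [_ Hn]] z Tz.
  have [m1 [m2 [Fe S1 S2 Fd]]] := eigsT a ss Tz.
  have [_ _ Q3] := signs S1 S2.
  rewrite -Fd; apply: Q3; rewrite -Fe; [exact: Hp | exact: Hn].
Qed.
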